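(* Let $\mathbb{K}$ be an ultrametric field and $\rho\in\mathbb{K}$ with $0<|\rho|<1$. Let $E$ be a metrizable (Hausdorff) topological $\mathbb{K}$-vector space, $U\subseteq E$ open, $x\in U$, and let $(x_n)_{n\in\mathbb{N}}$ and $(y_n)_{n\in\mathbb{N}}$ be sequences in $U$ converging to $x$. Then there exist an injective, monotonically increasing map $m\colon\mathbb{N}\to\mathbb{N}$, $k\mapsto m_k$, and a smooth curve $c\colon\mathbb{K}\to E$ with image in $U$ such that: (a) $c(\rho^k)=x_{m_k}$ for all odd $k\in\mathbb{N}$ and $c(\rho^k)=y_{m_k}$ for all even $k\in\mathbb{N}$; (b) $c(0)=x$; (c) $c|_{\mathbb{K}^\times}$ is locally constant; (d) if $t,s\in\mathbb{K}$ with $|t|=|s|$ then $c(t)=c(s)$; (e) $c(\mathbb{K}^\times)=\{c(\rho^k):k\in\mathbb{N}\}$.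
   Context: An ultrametric field is a field with a non-trivial absolute value satisfying $|x+y|\le\max\{|x|,|y|\}$. $\mathbb{N}=\{1,2,\dots\}$. Smoothness: for open $V$ in a topological $\mathbb{K}$-vector space $X$, $V^{[1]}:=\{(x,v,t)\in V\times X\times\mathbb{K}:x+tv\in V\}$; $g\colon V\to Y$ is $C^1$ if continuous and there is a continuous $g^{[1]}\colon V^{[1]}\to Y$ with $g(x+tv)-g(x)=t\,g^{[1]}(x,v,t)$; recursively $V^{[k+1]}=(V^{[k]})^{[1]}$, $g$ is $C^{k+1}$ if $C^k$ and $g^{[k]}$ is $C^1$, $g^{[k+1]}=(g^{[k]})^{[1]}$; smooth means $C^k$ for all $k$ (product topologies used). *)

(* Defs.v *)
From mathcomp Require Import all_boot all_order all_algebra.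
From mathcomp Require Import boolp classical_sets reals.
Set Implicit Arguments. Unset Strict Implicit. Unset Printing Implicit Defensive.
Import Order.TTheory GRing.Theory Num.Theory.
Local Open Scope ring_scope.
Local Open Scope classical_set_scope.

Section Ultrametric.
Variables (K : fieldType) (R : realType) (absK : K -> R).

Definition ultrametric_abs : Prop :=
  [/\ (forall x : K, 0 <= absK x),
      (forall x : K, absK x = 0 <-> x = 0),
      (forall x y : K, absK (x * y) = absK x * absK y),
      (forall x y : K, absK (x + y) <= Num.max (absK x) (absK y))
    & (exists x : K, absK x != 0 /\ absK x != 1)].

Variables (E : lmodType K) (d : E -> E -> R).

Definition is_metric : Prop :=
  [/\ (forall u v : E, 0 <= d u v),
      (forall u v : E, d u v = 0 <-> u = v),
      (forall u v : E, d u v = d v u)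
    & (forall u v w : E, d u w <= d u v + d v w)].

Definition tvs_metric : Prop :=
  [/\ is_metric,
      (forall (u v : E) (e : R), 0 < e -> exists2 del : R, 0 < del &
         forall u' v' : E, d u u' < del -> d v v' < del ->
           d (u + v) (u' + v') < e)
    & (forall (a : K) (u : E) (e : R), 0 < e -> exists2 del : R, 0 < del &
         forall (a' : K) (u' : E), absK (a - a') < del -> d u u' < del ->
           d (a *: u) (a' *: u') < e)].

Definition d_open (U : set E) : Prop :=
  forall u, U u -> exists2 r : R, 0 < r & forall v, d u v < r -> U v.

(* convergence of a sequence indexed by N = {1,2,...} (index 0 is ignored) *)
Definition d_converges (s : nat -> E) (l : E) : Prop :=
  forall e : R, 0 < e -> exists N : nat, forall n : nat, (N <= n)%N -> d (s n) l < e.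

(* ---- iterated domains for smoothness of curves K -> E ----
   With V = K (open) and X = K we have V^[k] = Dk k (the whole space), where
   D_0 = K and D_(k+1) = D_k x D_k x K. *)
Fixpoint Dk (k : nat) : Type :=
  match k with 0 => K | S k => (Dk k * Dk k * K)%type end.

Fixpoint addD (k : nat) : Dk k -> Dk k -> Dk k :=
  match k return Dk k -> Dk k -> Dk k with
  | 0 => fun a b : K => a + b
  | S k => fun p q => (addD p.1.1 q.1.1, addD p.1.2 q.1.2, p.2 + q.2)
  end.

Fixpoint scaleD (k : nat) (t : K) : Dk k -> Dk k :=
  match k return Dk k -> Dk k with
  | 0 => fun a : K => t * a
  | S k => fun p => (scaleD t p.1.1, scaleD t p.1.2, t * p.2)
  end.

(* max-metric on the finite product D_k; it induces the product topology *)
Fixpoint distD (k : nat) : Dk k -> Dk k -> R :=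
  match k return Dk k -> Dk k -> R with
  | 0 => fun a b : K => absK (a - b)
  | S k => fun p q => Num.max (Num.max (distD p.1.1 q.1.1) (distD p.1.2 q.1.2))
                              (absK (p.2 - q.2))
  end.

Definition continuousD (k : nat) (g : Dk k -> E) : Prop :=
  forall (p : Dk k) (e : R), 0 < e -> exists2 del : R, 0 < del &
    forall q : Dk k, distD p q < del -> d (g p) (g q) < e.

Definition smooth_curve (c : K -> E) : Prop :=
  exists G : forall k : nat, Dk k -> E,
    [/\ G 0%N = c,
        (forall k : nat, continuousD (G k))
      & (forall (k : nat) (p v : Dk k) (t : K),
           G k (addD p (scaleD t v)) - G k p = t *: G k.+1 (p, v, t))].

End Ultrametric.

(* Main.v *)
Require Import Defs.
From mathcomp Require Import all_boot all_order all_algebra.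
From mathcomp Require Import boolp classical_sets reals.
From mathcomp Require Import ring lra zify.
Import Order.TTheory GRing.Theory Num.Theory.
Set Implicit Arguments. Unset Strict Implicit. Unset Printing Implicit Defensive.
Local Open Scope ring_scope.

Section AbsLemmas.
Variables (K : fieldType) (R : realType) (absK : K -> R).
Hypothesis hK : ultrametric_abs absK.

Lemma aK_ge0 a : 0 <= absK a.
Proof. by case: hK. Qed.
Lemma aK_eq0 a : absK a = 0 <-> a = 0.
Proof. by case: hK. Qed.
Lemma aKM a b : absK (a * b) = absK a * absK b.
Proof. by case: hK. Qed.
Lemma aKD a b : absK (a + b) <= Num.max (absK a) (absK b).
Proof. by case: hK. Qed.
Lemma aK0 : absK 0 = 0.
Proof. by apply/aK_eq0. Qed.
Lemma aK_gt0 a : a != 0 -> 0 < absK a.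
Proof.
move=> h; rewrite lt_neqAle aK_ge0 andbT; apply/eqP => h0.
by move/eqP: h; apply; apply/aK_eq0.
Qed.
Lemma aK1 : absK 1 = 1.
Proof.
have h : absK 1 = absK 1 * absK 1 by rewrite -aKM mulr1.
have h1 : 0 < absK 1 by apply: aK_gt0; exact: oner_neq0.
by apply/eqP; rewrite eq_le; apply/andP; split; nra.
Qed.
Lemma aKN1 : absK (-1) = 1.
Proof.
have h : absK (-1) * absK (-1) = 1 by rewrite -aKM mulrNN mulr1 aK1.
have := aK_ge0 (-1) => h0.
by apply/eqP; rewrite eq_le; apply/andP; split; nra.
Qed.
Lemma aKN a : absK (- a) = absK a.
Proof. by rewrite -mulN1r aKM aKN1 mul1r. Qed.
Lemma aKB a b : absK (a - b) = absK (b - a).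
Proof. by rewrite -aKN opprB. Qed.
Lemma aKV a : absK (a^-1) = (absK a)^-1.
Proof.
have [->|h] := eqVneq a 0; first by rewrite invr0 aK0 invr0.
have : absK a * absK a^-1 = 1 by rewrite -aKM mulfV // aK1.
move=> e; have hp : absK a != 0 by rewrite gt_eqF // aK_gt0.
by apply: (mulfI hp); rewrite e mulfV.
Qed.
Lemma aKX a n : absK (a ^+ n) = absK a ^+ n.
Proof. elim: n => [|n IH]; first by rewrite !expr0 aK1. by rewrite !exprS aKM IH. Qed.
Lemma aKD_lt a b e : absK a < e -> absK b < e -> absK (a + b) < e.
Proof. move=> ha hb; apply: le_lt_trans (aKD a b) _; by rewrite gt_max ha hb. Qed.
Lemma aKD_le a b e : absK a <= e -> absK b <= e -> absK (a + b) <= e.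
Proof. move=> ha hb; apply: le_trans (aKD a b) _; by rewrite ge_max ha hb. Qed.
Lemma aKB_lt a b e : absK a < e -> absK b < e -> absK (a - b) < e.
Proof. by move=> ha hb; apply: aKD_lt; rewrite ?aKN. Qed.
Lemma aK_strict a b : absK b < absK a -> absK (a + b) = absK a.
Proof.
move=> h; apply/eqP; rewrite eq_le; apply/andP; split.
  by apply: le_trans (aKD a b) _; rewrite ge_max lexx ltW.
have := aKD (a + b) (- b); rewrite addrK aKN => h2.
case: (leP (absK (a + b)) (absK b)) => h3.
  by move: h2; rewrite max_r // => h4; move: (le_lt_trans h4 h); rewrite ltxx.
by move: h2; rewrite max_l // ltW.
Qed.
Lemma aK_tri a b c : absK (a - c) <= Num.max (absK (a - b)) (absK (b - c)).
Proof. by have := aKD (a - b) (b - c); rewrite addrA subrK. Qed.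
Lemma aK_close a b : absK (a - b) < absK a -> absK b = absK a.
Proof.
move=> h; have -> : b = a + (- (a - b)) by rewrite opprB addrC subrK.
by rewrite aK_strict // aKN.
Qed.
Lemma aK_lt0 e a : absK a < e -> 0 < e.
Proof. move=> h; exact: le_lt_trans (aK_ge0 a) h. Qed.

End AbsLemmas.

Section RealHelp.
Variable R : realType.

Lemma bernoulli (h : R) n : 0 <= h -> 1 + n%:R * h <= (1 + h) ^+ n.
Proof.
move=> h0; elim: n => [|n IH]; first by rewrite expr0 mul0r addr0.
rewrite exprS -natr1 mulrDl mul1r.
have hp : 0 <= (1 + h) ^+ n by apply: exprn_ge0; lra.
have : (1 + h) * (1 + n%:R * h) <= (1 + h) * (1 + h) ^+ n.
  by apply: ler_wpM2l => //; lra.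
have hn : 0 <= n%:R * h by apply: mulr_ge0 => //; exact: ler0n.
nra.
Qed.

Lemma pow_small (a e : R) : 0 <= a -> a < 1 -> 0 < e -> exists M : nat, a ^+ M < e.
Proof.
move=> a0 a1 e0.
have [->|an0] := eqVneq a 0; first by exists 1%N; rewrite expr1.
have ap : 0 < a by rewrite lt_neqAle eq_sym an0 a0.
set h := a^-1 - 1.
have hp : 0 < h by rewrite /h subr_gt0 invf_gt1.
have hb : 0 <= e^-1 / h by apply: divr_ge0; rewrite ?invr_ge0 ltW.
exists (Num.Def.archi_bound (e^-1 / h)).
set M := Num.Def.archi_bound _.
have hM := archi_boundP hb; rewrite -/M in hM.
have hb2 := bernoulli M (ltW hp).
have : a^-1 = 1 + h by rewrite /h addrC subrK.
move=> ah.
have hx : e^-1 < M%:R * h.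
  by rewrite -ltr_pdivrMr.
have : e^-1 < (a ^+ M)^-1.
  rewrite -exprVn ah; apply: lt_le_trans hb2; lra.
rewrite ltf_pV2 ?posrE ?exprn_gt0 //.
Qed.

Lemma min_pos (n : nat) (g : nat -> R) (P : nat -> bool) :
  (forall i, (i <= n)%N -> P i -> 0 < g i) ->
  exists2 b : R, 0 < b & forall i, (i <= n)%N -> P i -> b <= g i.
Proof.
elim: n => [|n IH] H.
  case: (boolP (P 0%N)) => h0.
    exists (g 0%N); first exact: H.
    by move=> i; rewrite leqn0 => /eqP ->.
  by exists 1 => // i; rewrite leqn0 => /eqP -> h; rewrite h in h0.
have [b b0 hb] : exists2 b : R, 0 < b & forall i, (i <= n)%N -> P i -> b <= g i.
  by apply: IH => i hi; apply: H; apply: leq_trans hi _.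
case: (boolP (P n.+1)) => hn.
  have gp := H _ (leqnn _) hn.
  exists (Num.min b (g n.+1)); first by rewrite lt_min b0.
  move=> i; rewrite leq_eqVlt => /orP [/eqP -> _|hi hP]; first by rewrite ge_min lexx orbT.
  by rewrite ge_min hb.
exists b => // i; rewrite leq_eqVlt => /orP [/eqP -> h|hi hP]; first by rewrite h in hn.
exact: hb.
Qed.

End RealHelp.

Section ContK.
Variables (K : fieldType) (R : realType) (absK : K -> R).
Hypothesis hK : ultrametric_abs absK.
Let aKM := aKM hK. Let aKN := aKN hK. Let aKV := aKV hK. Let aK0 := aK0 hK.
Let aKD_lt := aKD_lt hK. Let aK_ge0 := aK_ge0 hK. Let aK_gt0 := aK_gt0 hK.

Definition mono (X : Type) (near : R -> X -> Prop) :=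
  forall a b x, a <= b -> near a x -> near b x.

Definition cK (X : Type) (near : R -> X -> Prop) (F : X -> K) (x0 : X) :=
  forall e, 0 < e -> exists2 del, 0 < del & forall x, near del x -> absK (F x0 - F x) < e.

Lemma near_and (X : Type) (near : R -> X -> Prop) (A B : X -> Prop) :
  mono near ->
  (exists2 del, 0 < del & forall x, near del x -> A x) ->
  (exists2 del, 0 < del & forall x, near del x -> B x) ->
  exists2 del, 0 < del & forall x, near del x -> A x /\ B x.
Proof.
move=> hm [d1 d10 h1] [d2 d20 h2]; exists (Num.min d1 d2); first by rewrite lt_min d10.
move=> x hx; split; [apply: h1 | apply: h2]; apply: hm hx; by rewrite ge_min lexx ?orbT.
Qed.

Lemma near_big (X : Type) (near : R -> X -> Prop) (A : nat -> X -> Prop) n :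
  mono near ->
  (forall j, (j <= n)%N -> exists2 del, 0 < del & forall x, near del x -> A j x) ->
  exists2 del, 0 < del & forall x, near del x -> forall j, (j <= n)%N -> A j x.
Proof.
move=> hm; elim: n => [|n IH] H.
  have [del d0 h] := H 0%N (leqnn _); exists del => // x hx j; rewrite leqn0 => /eqP ->; exact: h.
have [del d0 h] := near_and hm (IH (fun j hj => H j (leq_trans hj (leqnSn _)))) (H n.+1 (leqnn _)).
exists del => // x hx j; rewrite leq_eqVlt => /orP [/eqP ->|hj]; first by case: (h x hx).
by case: (h x hx) => h1 _; apply: h1.
Qed.

Variables (X : Type) (near : R -> X -> Prop).
Hypothesis hm : mono near.

Lemma cK_const c x0 : cK near (fun _ => c) x0.
Proof. by move=> e e0; exists 1 => // x _; rewrite subrr aK0. Qed.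

Lemma cK_add F G x0 : cK near F x0 -> cK near G x0 -> cK near (fun x => F x + G x) x0.
Proof.
move=> hF hG e e0; have [del d0 h] := near_and hm (hF e e0) (hG e e0).
exists del => // x /h [h1 h2].
have -> : F x0 + G x0 - (F x + G x) = (F x0 - F x) + (G x0 - G x) by ring.
exact: aKD_lt.
Qed.

Lemma cK_opp F x0 : cK near F x0 -> cK near (fun x => - F x) x0.
Proof.
move=> hF e e0; have [del d0 h] := hF e e0; exists del => // x /h.
by rewrite -opprD aKN.
Qed.

Lemma cK_sub F G x0 : cK near F x0 -> cK near G x0 -> cK near (fun x => F x - G x) x0.
Proof. by move=> hF hG; apply: cK_add => //; apply: cK_opp. Qed.

Lemma aK_near F0 F : absK (F0 - F) < 1 -> absK F <= absK F0 + 1.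
Proof.
move=> h; have -> : F = F0 + (- (F0 - F)) by ring.
apply: le_trans (aKD hK _ _) _; rewrite aKN.
rewrite ge_max; apply/andP; split.
  by rewrite lerDl.
have := aK_ge0 F0; lra.
Qed.

Lemma cK_mul F G x0 : cK near F x0 -> cK near G x0 -> cK near (fun x => F x * G x) x0.
Proof.
move=> hF hG e e0.
set g := absK (G x0); set f := absK (F x0).
have g0 : 0 <= g := aK_ge0 _.
have f0 : 0 <= f := aK_ge0 _.
set e1 := Num.min 1 (e / (g + 1)).
have e10 : 0 < e1 by rewrite lt_min ltr01 divr_gt0 //; lra.
set e2 := e / (f + 1).
have e20 : 0 < e2 by rewrite divr_gt0 //; lra.
have [del d0 h] := near_and hm (hF e1 e10) (hG e2 e20).
exists del => // x /h [h1 h2].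
have -> : F x0 * G x0 - F x * G x = (F x0 - F x) * G x0 + F x * (G x0 - G x) by ring.
have e11 : e1 <= 1 by rewrite ge_min lexx.
have e12 : e1 <= e / (g + 1) by rewrite ge_min lexx orbT.
have e12' : e1 * (g + 1) <= e by rewrite -ler_pdivlMr //; lra.
have e2' : e2 * (f + 1) = e by rewrite /e2 mulfVK //; lra.
apply: aKD_lt; rewrite aKM.
  have := aK_ge0 (F x0 - F x); rewrite -/g; nra.
have hFx := aK_near (lt_le_trans h1 e11).
have := aK_ge0 (G x0 - G x); have := aK_ge0 (F x); rewrite -/f in hFx |- *; nra.
Qed.

Lemma cK_inv F x0 : F x0 != 0 -> cK near F x0 -> cK near (fun x => (F x)^-1) x0.
Proof.
move=> hn hF e e0.
set f := absK (F x0).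
have f0 : 0 < f by apply: aK_gt0.
have hpos : 0 < Num.min f (e * f * f) by rewrite lt_min f0 !mulr_gt0.
have [del d0 h] := hF _ hpos.
exists del => // x /h; rewrite lt_min => /andP [h1 h2].
have hx : absK (F x) = f := aK_close hK h1.
have hxn : F x != 0 by apply/eqP => h0; move: hx; rewrite h0 aK0 => h3; rewrite -h3 ltxx in f0.
have -> : (F x0)^-1 - (F x)^-1 = (F x - F x0) * ((F x0)^-1 * (F x)^-1).
  by field; rewrite hn hxn.
rewrite !aKM (aKB hK) !aKV hx -/f.
rewrite -ltr_pdivlMr ?mulr_gt0 ?invr_gt0 //.
by rewrite invfM !invrK mulrA.
Qed.

End ContK.

Definition skip (T : Type) (y : nat -> T) (p : nat) : nat -> T := fun j => y (bump p j).

Lemma bump_le (p i : nat) : (bump p i <= i.+1)%N.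
Proof. rewrite /bump; case: (leqP p i) => h /=; lia. Qed.
Lemma bump_small (p i : nat) : (i < p)%N -> bump p i = i.
Proof. rewrite /bump; case: (leqP p i) => h /=; lia. Qed.
Lemma bump_inj (p i j : nat) : bump p i = bump p j -> i = j.
Proof. by move/(f_equal (unbump p)); rewrite !bumpK. Qed.

Section Lagrange.
Variables (K : fieldType) (R : realType) (absK : K -> R).
Hypothesis hK : ultrametric_abs absK.

Definition nearN (n : nat) (y0 : nat -> K) := fun (del : R) (y : nat -> K) =>
  forall i, (i <= n)%N -> absK (y0 i - y i) < del.

Lemma nearN_mono n y0 : mono (nearN n y0).
Proof. move=> a b y hab h i hi; exact: lt_le_trans (h i hi) hab. Qed.

Lemma cK_coord n y0 i : (i <= n)%N -> cK absK (nearN n y0) (fun y => y i) y0.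
Proof. by move=> hi e e0; exists e => // y /(_ i hi). Qed.

Lemma cK_comp n k y0 (T : (nat -> K) -> nat -> K) (F : (nat -> K) -> K) :
  (forall del y, nearN n y0 del y -> nearN k (T y0) del (T y)) ->
  cK absK (nearN k (T y0)) F (T y0) -> cK absK (nearN n y0) (fun y => F (T y)) y0.
Proof. move=> hT hF e e0; have [del d0 h] := hF e e0; exists del => // y /hT; exact: h. Qed.

Lemma cK_local X (near : R -> X -> Prop) (F G : X -> K) x0 del0 :
  mono near -> 0 < del0 -> (forall x, near del0 x -> F x = G x) -> F x0 = G x0 ->
  cK absK near G x0 -> cK absK near F x0.
Proof.
move=> hm d0 hFG h0 hG e e0.
have [del d1 h] := near_and hm (ex_intro2 _ _ del0 d0 hFG) (hG e e0).
exists del => // x /h [h1 h2]; by rewrite h0 h1.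
Qed.

Definition Lag (g : K -> K) (k : nat) (y : nat -> K) : K :=
  \sum_(l < k.+1) g (y l) / \prod_(m < k.+1 | m != l) (y l - y m).

Definition distinct (k : nat) (y : nat -> K) :=
  forall i j, (i <= k)%N -> (j <= k)%N -> i != j -> y i != y j.

Lemma distinct_skip k y p : distinct k.+1 y -> distinct k (skip y p).
Proof.
move=> h i j hi hj hij; apply: h; try exact: leq_trans (bump_le _ _) _.
by apply/eqP => /bump_inj /eqP; apply/negP.
Qed.

Lemma distinct_le k y : distinct k.+1 y -> distinct k y.
Proof. move=> h i j hi hj; apply: h; exact: leqW. Qed.

Lemma sum_lift (n : nat) (p : 'I_n.+1) (F : 'I_n.+1 -> K) :
  \sum_(i < n.+1) F i = F p + \sum_(i < n) F (lift p i).
Proof. exact: (bigD1_ord p). Qed.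
Lemma prod_lift (n : nat) (p : 'I_n.+1) (P : pred 'I_n.+1) (F : 'I_n.+1 -> K) : P p ->
  \prod_(i < n.+1 | P i) F i = F p * \prod_(i < n | P (lift p i)) F (lift p i).
Proof. exact: (bigD1_ord p). Qed.

Lemma Lag_skip g k y (p : 'I_k.+2) : distinct k.+1 y ->
  Lag g k (skip y p) =
  \sum_(l < k.+2) g (y l) * (y l - y p) / \prod_(m < k.+2 | m != l) (y l - y m).
Proof.
move=> hd; rewrite (@sum_lift _ p) [y p - y p]subrr [g (y p) * 0]mulr0 [0 / _]mul0r add0r.
rewrite /Lag; apply: eq_bigr => i _.
rewrite (@prod_lift _ p (fun m => m != lift p i)) ?neq_lift //.
have ha : y (lift p i) - y p != 0.
  rewrite subr_eq0; apply: hd; [by rewrite -ltnS ltn_ord | by rewrite -ltnS ltn_ord |].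
  by rewrite eq_sym neq_lift.
have -> : \prod_(i0 < k.+1 | lift p i0 != lift p i) (y (lift p i) - y (lift p i0)) =
    \prod_(i0 < k.+1 | i0 != i) (y (lift p i) - y (lift p i0)).
  by apply: eq_bigl => m; rewrite (inj_eq lift_inj).
by rewrite /skip invfM mulrA mulfK.
Qed.

Lemma Lag_pair g k y (p q : 'I_k.+2) : distinct k.+1 y ->
  Lag g k (skip y p) - Lag g k (skip y q) = (y q - y p) * Lag g k.+1 y.
Proof.
move=> hd; rewrite !Lag_skip // -sumrB /Lag mulr_sumr; apply: eq_bigr => l _.
set D := (\prod_(_ < _ | _) _).
set a := g (y l); set u := y l; set v := y p; set w := y q.
rewrite /(_ / _) !mulrA -mulrBl; congr (_ * _).
rewrite -mulrBr mulrC; congr (_ * _).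
by rewrite opprB addrC addrA subrK.
Qed.

Lemma Lag0 g y : Lag g 0 y = g (y 0%N).
Proof.
rewrite /Lag big_ord1 big1 ?invr1 ?mulr1 // => m; by rewrite (ord1 m) eqxx.
Qed.

Lemma Lag_const e k y : distinct k.+1 y -> Lag (fun _ => e) k.+1 y = 0.
Proof.
elim: k y => [|k IH] y hd.
  have := Lag_pair (fun _ => e) ord0 ord_max hd; rewrite !Lag0 subrr => /esym /eqP.
  rewrite mulf_eq0 => /orP [|/eqP //]; rewrite subr_eq0 => /eqP h.
  by move: (hd 1%N 0%N (leqnn _) (leq0n _) isT); rewrite h eqxx.
have := Lag_pair (fun _ => e) ord0 ord_max hd.
rewrite !IH ?subrr; try exact: distinct_skip.
move=> /esym /eqP; rewrite mulf_eq0 => /orP [|/eqP //]; rewrite subr_eq0 => /eqP h.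
by move: (hd k.+2 0%N (leqnn _) (leq0n _) isT); rewrite /= h eqxx.
Qed.

End Lagrange.

Section PhiSec.
Variables (K : fieldType) (R : realType) (absK : K -> R).
Hypothesis hK : ultrametric_abs absK.
Let aKM := aKM hK. Let aKN := aKN hK. Let aKV := aKV hK. Let aK0 := aK0 hK.
Let aKD_lt := aKD_lt hK. Let aK_ge0 := aK_ge0 hK. Let aK_gt0 := aK_gt0 hK.
Let aKB := aKB hK. Let aKB_lt := aKB_lt hK. Let aKD_le := aKD_le hK.

Variables (r : R) (f : K -> K).

Fixpoint Phi (k : nat) (y : nat -> K) : K :=
  match k with
  | 0 => f (y 0%N)
  | k'.+1 =>
    match [pick p : 'I_k'.+1 | r <= absK (y p - y k'.+1)] with
    | Some p => (Phi k' (skip y p) - Phi k' y) / (y k'.+1 - y p)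
    | None => 0
    end
  end.

Lemma Phi_ext k y y' : (forall i, (i <= k)%N -> y i = y' i) -> Phi k y = Phi k y'.
Proof.
elim: k y y' => [|k IH] y y' H /=; first by rewrite H.
have -> : [pick p : 'I_k.+1 | r <= absK (y p - y k.+1)] =
          [pick p : 'I_k.+1 | r <= absK (y' p - y' k.+1)].
  apply: eq_pick => p; rewrite !H // ltnW // ltn_ord.
case: pickP => // p _.
rewrite (IH (skip y p) (skip y' p)); last first.
  move=> i hi; apply: H; exact: leq_trans (bump_le _ _) _.
rewrite (IH y y'); last by move=> i hi; apply: H; apply: leqW.
rewrite !H //; exact: ltnW (ltn_ord p).
Qed.

Lemma Phi_last k y : Phi k y = Phi k (skip y k.+1).
Proof. apply: Phi_ext => i hi; by rewrite /skip bump_small. Qed.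

Hypothesis r0 : 0 < r.
Hypothesis f_lc : forall a b, absK (a - b) < r -> f a = f b.
Hypothesis f_bnd : forall a, absK (f a) <= 1.

Lemma Phi_bnd k y : absK (Phi k y) <= r^-1 ^+ k.
Proof.
elim: k y => [|k IH] y /=; first by rewrite expr0.
case: pickP => [p hp|_]; last by rewrite aK0 exprn_ge0 // invr_ge0 ltW.
rewrite aKM aKV exprSr; apply: ler_pM; rewrite ?aK_ge0 ?invr_ge0 ?aK_ge0 //.
  by apply: aKD_le; rewrite ?aKN IH.
have hpos : 0 < absK (y k.+1 - y p) by rewrite aKB; exact: lt_le_trans r0 hp.
by rewrite lef_pV2 ?posrE // aKB.
Qed.

Lemma Phi_supp k y : (forall i, (i <= k)%N -> f (y i) = 0) -> Phi k y = 0.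
Proof.
elim: k y => [|k IH] y H /=; first exact: H.
case: pickP => // p _.
rewrite (IH y); last by move=> i hi; apply: H; apply: leqW.
rewrite IH ?subrr ?mul0r //.
move=> i hi; apply: H; exact: leq_trans (bump_le _ _) _.
Qed.

Lemma far_stable (u0 u : K) : absK (u0 - u) < r -> (r <= absK u) = (r <= absK u0).
Proof.
move=> h; apply/idP/idP => h1.
  have h2 : absK (u - u0) < absK u by rewrite aKB; exact: lt_le_trans h h1.
  by rewrite (aK_close hK h2).
have h2 : absK (u0 - u) < absK u0 by exact: lt_le_trans h h1.
by rewrite (aK_close hK h2).
Qed.

Lemma Phi_cont k y0 : cK absK (nearN absK k y0) (Phi k) y0.
Proof.
elim: k y0 => [|k IH] y0.
  move=> e e0; exists r => // y /(_ 0%N (leqnn _)) h /=.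
  by rewrite (f_lc h) subrr aK0.
have hloc : forall y, nearN absK k.+1 y0 r y ->
    [pick p : 'I_k.+1 | r <= absK (y p - y k.+1)] =
    [pick p : 'I_k.+1 | r <= absK (y0 p - y0 k.+1)].
  move=> y hy; apply: eq_pick => p /=; apply: far_stable.
  have -> : y0 p - y0 k.+1 - (y p - y k.+1) = (y0 p - y p) - (y0 k.+1 - y k.+1) by ring.
  apply: aKB_lt; apply: hy => //; exact: ltnW (ltn_ord p).
case hpick : [pick p : 'I_k.+1 | r <= absK (y0 p - y0 k.+1)] => [p|]; last first.
  move=> e e0; exists r => // y hy /=; by rewrite hloc // hpick subrr aK0.
have hp : r <= absK (y0 p - y0 k.+1) by move: hpick; case: pickP => // p' h [<-].
set G := fun y : nat -> K => (Phi k (skip y p) - Phi k y) * (y k.+1 - y p)^-1.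
have hG : cK absK (nearN absK k.+1 y0) G y0.
  have hm := @nearN_mono _ _ absK k.+1 y0.
  refine (cK_mul hK hm _ _).
    refine (cK_sub hK hm _ _).
      refine (cK_comp _ (IH (skip y0 p))).
      move=> del y hy i hi; apply: hy; exact: leq_trans (bump_le _ _) _.
    refine (cK_comp (T := id) _ (IH y0)).
    move=> del y hy i hi; apply: hy; exact: leqW.
  refine (cK_inv hK _ _).
    by apply/eqP => h; move: hp; rewrite aKB h aK0 leNgt r0.
  refine (cK_sub hK hm _ _); apply: cK_coord => //; exact: ltnW (ltn_ord p).
refine (cK_local (@nearN_mono _ _ absK k.+1 y0) r0 _ _ hG).
  by move=> y hy /=; rewrite hloc // hpick.
by rewrite /= hpick.
Qed.

Lemma Phi_L k y : distinct k y -> Phi k y = Lag f k y.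
Proof.
elim: k y => [|k IH] y hd; first by rewrite Lag0.
rewrite /=; case: pickP => [p hp|hn].
  rewrite IH; last exact: distinct_skip.
  rewrite Phi_last IH; last by apply: distinct_skip.
  have := Lag_pair f (widen_ord (leqnSn _) p) ord_max hd.
  rewrite /= => ->.
  rewrite [_ * Lag f _ _]mulrC mulfK //; rewrite subr_eq0; apply: hd => //.
    exact: ltnW (ltn_ord p).
  by rewrite neq_ltn ltn_ord orbT.
have -> : Lag f k.+1 y = Lag (fun _ => f (y k.+1)) k.+1 y.
  rewrite /Lag; apply: eq_bigr => l _; congr (_ / _).
  have : (l <= k.+1)%N by rewrite -ltnS ltn_ord.
  rewrite leq_eqVlt => /orP [/eqP -> //|hl].
  apply: f_lc; move: (hn (Ordinal hl)); rewrite /= => /negbT.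
  by rewrite -ltNge.
by rewrite Lag_const.
Qed.

Variables (rho : K).
Hypotheses (hrho0 : 0 < absK rho) (hrho1 : absK rho < 1).

Lemma dense_distinct n y0 del : 0 < del ->
  exists y, nearN absK n y0 del y /\ distinct n y.
Proof.
move=> d0; elim: n => [|n [y [hy hd]]].
  exists y0; split; first by move=> i _; rewrite subrr aK0.
  by move=> i j; rewrite !leqn0 => /eqP -> /eqP ->; rewrite eqxx.
have [b b0 hb] : exists2 b : R, 0 < b & forall i, (i <= n)%N -> y i != y0 n.+1 ->
    b <= absK (y i - y0 n.+1).
  apply: min_pos => i _ h; apply: aK_gt0; by rewrite subr_eq0.
have bd0 : 0 < Num.min b del by rewrite lt_min b0 d0.
have [M hM] := pow_small (aK_ge0 rho) hrho1 bd0.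
have hM' : absK (rho ^+ M) < Num.min b del by rewrite (aKX hK).
move: hM'; rewrite lt_min => /andP [hMb hMd].
have rn : rho ^+ M != 0.
  apply: expf_neq0; apply/eqP => h; move: hrho0; by rewrite h aK0 ltxx.
set z := y0 n.+1 + rho ^+ M.
have hz : forall j, (j <= n)%N -> z != y j.
  move=> j hj; case: (eqVneq (y j) (y0 n.+1)) => hj2.
    by rewrite hj2 /z -subr_eq0 addrC addKr.
  have hb2 := hb j hj hj2.
  have hs : absK (rho ^+ M) < absK (y0 n.+1 - y j) by rewrite aKB; exact: lt_le_trans hMb hb2.
  apply/eqP => e; have : absK (z - y j) = 0 by rewrite e subrr aK0.
  rewrite /z addrAC (aK_strict hK hs) => h0.
  by move: (lt_le_trans b0 hb2); rewrite aKB h0 ltxx.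
exists (fun i => if i == n.+1 then z else y i); split.
  move=> i; rewrite leq_eqVlt => /orP [/eqP ->|hi].
    by rewrite eqxx /z opprD addNKr aKN.
  by rewrite ltn_eqF //; exact: (hy i hi).
move=> i j hi0 hj0 hij.
move: hi0; rewrite leq_eqVlt => /orP [/eqP ei|hi];
move: hj0; rewrite leq_eqVlt => /orP [/eqP ej|hj]; subst.
- by rewrite eqxx in hij.
- by rewrite eqxx ltn_eqF //; apply: hz.
- by rewrite eqxx ltn_eqF // eq_sym; apply: hz.
- by rewrite !ltn_eqF //; apply: hd.
Qed.

Lemma Phi_I_dist k y i : (i <= k)%N -> distinct k.+1 y ->
  Phi k (skip y i) - Phi k (skip y i.+1) = (y i.+1 - y i) * Phi k.+1 y.
Proof.
move=> hi hd; rewrite !Phi_L //; try exact: distinct_skip.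
have hi1 : (i < k.+2)%N by rewrite ltnS leqW.
have hi2 : (i.+1 < k.+2)%N by rewrite ltnS.
exact: (Lag_pair f (Ordinal hi1) (Ordinal hi2) hd).
Qed.

Lemma skip_near k y0 del y p : nearN absK k.+1 y0 del y -> nearN absK k (skip y0 p) del (skip y p).
Proof. move=> h j hj; apply: h; exact: leq_trans (bump_le _ _) _. Qed.

Lemma Phi_I k y i : (i <= k)%N ->
  Phi k (skip y i) - Phi k (skip y i.+1) = (y i.+1 - y i) * Phi k.+1 y.
Proof.
move=> hi.
set F := fun y => Phi k (skip y i) - Phi k (skip y i.+1) - (y i.+1 - y i) * Phi k.+1 y.
suff : F y = 0 by move/eqP; rewrite subr_eq0 => /eqP.
have hm := @nearN_mono _ _ absK k.+1 y.
have hF : cK absK (nearN absK k.+1 y) F y.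
  refine (cK_sub hK hm _ _).
    refine (cK_sub hK hm _ _).
      refine (cK_comp (T := fun y => skip y i) _ (Phi_cont _ _)).
      move=> del z; exact: skip_near.
    refine (cK_comp (T := fun y => skip y i.+1) _ (Phi_cont _ _)).
    move=> del z; exact: skip_near.
  refine (cK_mul hK hm _ (Phi_cont _ _)).
  refine (cK_sub hK hm _ _); apply: cK_coord => //; exact: leqW.
apply/eqP; case: (eqVneq (F y) 0) => // hne.
have [del d0 h] := hF _ (aK_gt0 hne).
have [z [hz hdz]] := @dense_distinct k.+1 y del d0.
have := h z hz; rewrite {2}/F Phi_I_dist // subrr subr0 ltxx //.
Qed.

End PhiSec.

Lemma mix_skip (T : Type) (A B : nat -> T) (i j : nat) :
  let Z := fun j => if (j < i)%N then A j else if j == i then B i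
                    else if j == i.+1 then A i else B j.-1 in
  Z (bump i j) = (if (j < i.+1)%N then A j else B j) /\
  Z (bump i.+1 j) = (if (j < i)%N then A j else B j).
Proof.
move=> Z; rewrite /Z /bump.
have [h|[h|h]] : (j < i \/ i < j \/ j = i)%N by lia.
- have -> : (i <= j)%N = false by lia.
  have -> : (i.+1 <= j)%N = false by lia.
  rewrite !add0n h; have -> : (j < i.+1)%N by lia. by [].
- have -> : (i <= j)%N by lia.
  have -> : (i.+1 <= j)%N by lia.
  rewrite !add1n.
  have -> : (j.+1 < i)%N = false by lia.
  have -> : (j.+1 == i) = false by apply/eqP; lia.
  have -> : (j.+1 == i.+1) = false by apply/eqP; lia.
  have -> : (j < i.+1)%N = false by lia.
  have -> : (j < i)%N = false by lia.
  by [].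
- subst j; rewrite leqnn add1n ltnn eqxx ltnSn.
  have -> : (i.+1 <= i)%N = false by lia.
  have -> : (i.+1 < i)%N = false by lia.
  have -> : (i.+1 == i) = false by apply/eqP; lia.
  by rewrite /= add0n eqxx.
Qed.

Section Smooth.
Variables (K : fieldType) (R : realType) (absK : K -> R).
Hypothesis hK : ultrametric_abs absK.
Variables (E : lmodType K) (d : E -> E -> R).
Hypothesis hE : tvs_metric absK d.

Lemma dE_refl u : d u u = 0.
Proof. by case: hE => -[_ h _ _] _ _; apply/h. Qed.

Definition cE (X : Type) (near : R -> X -> Prop) (G : X -> E) (x0 : X) :=
  forall e, 0 < e -> exists2 del, 0 < del & forall x, near del x -> d (G x0) (G x) < e.

Section CE.
Variables (X : Type) (near : R -> X -> Prop).
Hypothesis hm : mono near.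

Lemma cE_const u x0 : cE near (fun _ => u) x0.
Proof. by move=> e e0; exists 1 => // x _; rewrite dE_refl. Qed.

Lemma cE_add G H x0 : cE near G x0 -> cE near H x0 -> cE near (fun x => G x + H x) x0.
Proof.
move=> hG hH e e0; case: hE => _ hadd _.
have [del d0 h] := hadd (G x0) (H x0) e e0.
have [del' d1 h'] := near_and hm (hG del d0) (hH del d0).
by exists del' => // x /h' [h1 h2]; apply: h.
Qed.

Lemma cE_scale F G x0 : cK absK near F x0 -> cE near G x0 ->
  cE near (fun x => F x *: G x) x0.
Proof.
move=> hF hG e e0; case: hE => _ _ hsc.
have [del d0 h] := hsc (F x0) (G x0) e e0.
have [del' d1 h'] := near_and hm (hF del d0) (hG del d0).
by exists del' => // x /h' [h1 h2]; apply: h.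
Qed.

End CE.

Let aKM := aKM hK. Let aKN := aKN hK. Let aK0 := aK0 hK. Let aKB := aKB hK.
Let aK_ge0 := aK_ge0 hK.

Definition nearD n (p0 : Dk K n) := fun (del : R) (q : Dk K n) => distD absK p0 q < del.
Lemma nearD_mono n p0 : mono (@nearD n p0).
Proof. move=> a b q hab h; exact: lt_le_trans h hab. Qed.

Local Unset Implicit Arguments.
Inductive coord : forall n, (Dk K n -> K) -> Prop :=
| coord0 : coord 0%N (fun a : Dk K 0 => a)
| coordL n L : coord n L -> coord n.+1 (fun p : Dk K n.+1 => L p.1.1)
| coordR n L : coord n L -> coord n.+1 (fun p : Dk K n.+1 => L p.1.2)
| coordT n : coord n.+1 (fun p : Dk K n.+1 => p.2).

Local Set Implicit Arguments.
Lemma coord_add n L : coord n L -> forall p q, L (addD p q) = L p + L q.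
Proof. by elim=> //=. Qed.
Lemma coord_scale n L : coord n L -> forall t p, L (scaleD t p) = t * L p.
Proof. by elim=> //=. Qed.
Lemma coord_dist n L : coord n L -> forall p q, absK (L p - L q) <= distD absK p q.
Proof.
elim=> [p q|n' L' _ IH p q|n' L' _ IH p q|n' p q] /=.
- exact: lexx.
- by apply: le_trans (IH _ _) _; rewrite !le_max lexx.
- by apply: le_trans (IH _ _) _; rewrite !le_max lexx !orbT.
- by rewrite le_max lexx orbT.
Qed.

Local Unset Implicit Arguments.
Inductive poly (n : nat) : (Dk K n -> K) -> Prop :=
| polyC c : poly n (fun _ => c)
| polyL L : coord n L -> poly n L
| polyD f g : poly n f -> poly n g -> poly n (fun p => f p + g p)
| polyM f g : poly n f -> poly n g -> poly n (fun p => f p * g p).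

Local Set Implicit Arguments.
Lemma poly_ext n f g : poly n f -> f =1 g -> poly n g.
Proof. by move=> h e; have <- : f = g by apply: funext. Qed.

Lemma poly_lift n f : poly n f -> poly n.+1 (fun q : Dk K n.+1 => f q.1.1).
Proof.
elim=> [c|L hL|f1 g1 _ h1 _ h2|f1 g1 _ h1 _ h2]; try by constructor.
  by apply: polyL; apply: coordL.
Qed.

Definition shiftD n (q : Dk K n.+1) : Dk K n := addD q.1.1 (scaleD q.2 q.1.2).

Lemma poly_shift n f : poly n f -> poly n.+1 (fun q => f (shiftD q)).
Proof.
elim=> [c|L hL|f1 g1 _ h1 _ h2|f1 g1 _ h1 _ h2]; try by constructor.
apply: (@poly_ext _ (fun q : Dk K n.+1 => L q.1.1 + q.2 * L q.1.2)).
  apply: polyD; first by apply: polyL; apply: coordL.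
  by apply: polyM; apply: polyL; [apply: coordT | apply: coordR].
by move=> q; rewrite /shiftD coord_add // coord_scale.
Qed.

Lemma poly_deriv n f : poly n f -> exists f', poly n.+1 f' /\
  forall p v t, f (addD p (scaleD t v)) - f p = t * f' (p, v, t).
Proof.
elim=> [c|L hL|f1 g1 _ [f1' [h1 e1]] _ [g1' [h2 e2]]|f1 g1 hf1 [f1' [h1 e1]] hg1 [g1' [h2 e2]]].
- by exists (fun _ => 0); split; [constructor | move=> *; rewrite subrr mulr0].
- exists (fun q : Dk K n.+1 => L q.1.2); split; first by apply: polyL; apply: coordR.
  by move=> p v t; rewrite /= coord_add // coord_scale // addrC addKr.
- exists (fun q => f1' q + g1' q); split; first by constructor.
  by move=> p v t; rewrite mulrDr -e1 -e2; ring.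
- exists (fun q => f1' q * g1 (shiftD q) + f1 q.1.1 * g1' q); split.
    apply: polyD; apply: polyM => //; [exact: poly_shift | exact: poly_lift].
  move=> p v t; rewrite /shiftD /=.
  have E1 := e1 p v t; have E2 := e2 p v t.
  set A := f1 _ in E1 *; set B := g1 _ in E2 *.
  have -> : t * (f1' (p, v, t) * B + f1 p * g1' (p, v, t)) =
    (t * f1' (p, v, t)) * B + f1 p * (t * g1' (p, v, t)) by ring.
  rewrite -E1 -E2; ring.
Qed.

Lemma poly_cont n f : poly n f -> forall p0, cK absK (@nearD n p0) f p0.
Proof.
have hm := @nearD_mono n.
elim=> [c|L hL|f1 g1 _ h1 _ h2|f1 g1 _ h1 _ h2] p0.
- exact: cK_const.
- move=> e e0; exists e => // q hq; exact: le_lt_trans (coord_dist hL _ _) hq.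
- exact: (cK_add hK (hm p0)).
- exact: (cK_mul hK (hm p0)).
Qed.

End Smooth.

Section Terms.
Variables (K : fieldType) (R : realType) (absK : K -> R).
Hypothesis hK : ultrametric_abs absK.
Variables (E : lmodType K) (d : E -> E -> R).
Hypothesis hE : tvs_metric absK d.
Variable Phi : nat -> (nat -> K) -> E.
Hypothesis HPc : forall k y0, cE d (nearN absK k y0) (Phi k) y0.
Hypothesis HPe : forall k y y', (forall i, (i <= k)%N -> y i = y' i) -> Phi k y = Phi k y'.
Hypothesis HPI : forall k y i, (i <= k)%N ->
  Phi k (skip y i) - Phi k (skip y i.+1) = (y i.+1 - y i) *: Phi k.+1 y.

Local Unset Implicit Arguments.
Inductive term (n : nat) : (Dk K n -> E) -> Prop :=
| term0 : term n (fun _ => 0)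
| termD g h : term n g -> term n h -> term n (fun p => g p + h p)
| termB k phi P : poly K n phi -> (forall j, poly K n (P j)) ->
    term n (fun p => phi p *: Phi k (fun j => P j p)).
Local Set Implicit Arguments.
Arguments term0 {n}. Arguments termD {n g h}. Arguments termB {n} k {phi P}.

Lemma term_ext n g h : term n g -> g =1 h -> term n h.
Proof. by move=> t e; have <- : g = h by apply: funext. Qed.

Lemma term_sum n m (g : 'I_m -> Dk K n -> E) : (forall i, term n (g i)) ->
  term n (fun p => \sum_(i < m) g i p).
Proof.
elim: m g => [|m IH] g H.
  by apply: (term_ext term0) => p; rewrite big_ord0.
apply: (term_ext (termD (IH (fun i => g (widen_ord (leqnSn m) i)) (fun i => H _)) (H ord_max))).
by move=> p; rewrite big_ord_recr.
Qed.

Lemma term_cont n g : term n g -> forall p0, cE d (nearD absK p0) g p0.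
Proof.
have hm := @nearD_mono _ _ absK n.
elim=> [|g1 h1 _ IH1 _ IH2|k phi P hphi hP] p0.
- exact: (cE_const hE).
- exact: (cE_add hE (hm p0)).
apply: (cE_scale hE (hm p0) (poly_cont hK hphi p0)).
move=> e e0; have [del d0 h] := HPc k (fun j => P j p0) e0.
have [del' d1 h'] := @near_big _ _ (nearD absK p0) (fun j q => absK (P j p0 - P j q) < del) k
  (hm p0) (fun j _ => poly_cont hK (hP j) p0 d0).
by exists del' => // q hq; apply: h => i hi; exact: h' q hq i hi.
Qed.

Lemma term_deriv n g : term n g -> exists g', term n.+1 g' /\
  forall p v t, g (addD p (scaleD t v)) - g p = t *: g' (p, v, t).
Proof.
elim=> [|g1 h1 _ [g1' [t1 e1]] _ [h1' [t2 e2]]|k phi P hphi hP].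
- exists (fun _ => 0); split; [exact: term0 | by move=> *; rewrite subrr scaler0].
- exists (fun q => g1' q + h1' q); split; first exact: termD.
  by move=> p v t; rewrite scalerDr -e1 -e2 opprD addrACA.
have [phi' [hphi' ephi]] := poly_deriv hphi.
have [P' hP'] : {P' : nat -> Dk K n.+1 -> K & forall j, poly K n.+1 (P' j) /\
    forall p v t, P j (addD p (scaleD t v)) - P j p = t * P' j (p, v, t)}.
  exact: (choice (fun j => poly_deriv (hP j))).
set Q := fun (i : nat) (q : Dk K n.+1) (j : nat) =>
  if (j < i)%N then P j (shiftD q) else if j == i then P i q.1.1
  else if j == i.+1 then P i (shiftD q) else P j.-1 q.1.1.
exists (fun q => phi' q *: Phi k (fun j => P j (shiftD q)) +
  \sum_(i < k.+1) (phi q.1.1 * P' i q) *: Phi k.+1 (Q i q)).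
split.
  apply: termD; first by apply: termB => // j; apply: poly_shift.
  refine (@term_sum n.+1 k.+1 (fun (i : 'I_k.+1) q => (phi q.1.1 * P' i q) *: Phi k.+1 (Q i q)) _) => i.
  refine (@termB n.+1 k.+1 (fun q => phi q.1.1 * P' i q) (fun j q => Q i q j) _ _).
    by apply: polyM; [apply: poly_lift | case: (hP' i)].
  move=> j /=; rewrite /Q; case: (j < i)%N => /=; first exact: poly_shift.
  case: (j == i) => /=; first exact: (poly_lift (hP i)).
  case: (j == i.+1) => /=; [exact: poly_shift | exact: (poly_lift (hP j.-1))].
move=> p v t.
set S := addD p (scaleD t v).
set mix := fun i j => if (j < i)%N then P j S else P j p.
have tele : Phi k (fun j => P j S) - Phi k (fun j => P j p) =
    \sum_(i < k.+1) (t * P' i (p, v, t)) *: Phi k.+1 (Q i (p, v, t)).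
  have -> : Phi k (fun j => P j S) = Phi k (mix k.+1) by apply: HPe => j hj; rewrite /mix ltnS hj.
  have -> : Phi k (fun j => P j p) = Phi k (mix 0%N) by apply: HPe.
  rewrite -(telescope_sumr (fun i => Phi k (mix i)) (leq0n k.+1)) big_mkord.
  apply: eq_bigr => i _.
  have -> : Phi k (mix i.+1) = Phi k (skip (Q i (p, v, t)) i).
    apply: HPe => j _; rewrite /skip.
    exact: (esym (mix_skip (fun j => P j S) (fun j => P j p) i j).1).
  have -> : Phi k (mix i) = Phi k (skip (Q i (p, v, t)) i.+1).
    apply: HPe => j _; rewrite /skip.
    exact: (esym (mix_skip (fun j => P j S) (fun j => P j p) i j).2).
  rewrite HPI; last by rewrite -ltnS.
  congr (_ *: _); rewrite /Q ltnn eqxx.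
  have -> : (i.+1 < i)%N = false by rewrite ltnNge leqnSn.
  rewrite (gtn_eqF (ltnSn i)) eqxx.
  by case: (hP' i) => _ ->.
rewrite /= -/S.
have -> : phi S = phi p + t * phi' (p, v, t) by rewrite -ephi addrC subrK.
set AS := Phi k (fun j => P j S); set Ap := Phi k (fun j => P j p).
have -> : (phi p + t * phi' (p, v, t)) *: AS - phi p *: Ap =
    (t * phi' (p, v, t)) *: AS + phi p *: (AS - Ap).
  by rewrite scalerDl scalerBr addrAC addrC addrA.
rewrite tele scalerDr scalerA; congr (_ + _).
rewrite !scaler_sumr; apply: eq_bigr => i _; rewrite !scalerA; congr (_ *: _).
by rewrite mulrCA.
Qed.

Lemma term_c : term 0 (fun t : Dk K 0 => Phi 0 (fun _ => t)).
Proof.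
have h1 : poly K 0 (fun _ => 1) by constructor.
have h2 : forall j : nat, poly K 0 (fun t : Dk K 0 => t) by move=> j; apply: polyL; constructor.
refine (term_ext (@termB 0 0 (fun _ => 1) (fun _ (t : Dk K 0) => t) h1 h2) _).
by move=> t; rewrite scale1r.
Qed.

Fixpoint Gs (n : nat) : {g : Dk K n -> E | term n g} :=
  match n return {g : Dk K n -> E | term n g} with
  | 0 => exist _ _ term_c
  | n'.+1 =>
    let w := cid (term_deriv (proj2_sig (Gs n'))) in
    exist _ (proj1_sig w) (proj1 (proj2_sig w))
  end.

Theorem Phi_smooth : smooth_curve absK d (fun t => Phi 0 (fun _ => t)).
Proof.
exists (fun n => proj1_sig (Gs n)); split => //.
  move=> k p e e0; exact: (term_cont (proj2_sig (Gs k)) p e0).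
move=> k p v t; exact: (proj2 (proj2_sig (cid (term_deriv (proj2_sig (Gs k))))) p v t).
Qed.

End Terms.

Section Kappa.
Variables (K : fieldType) (R : realType) (absK : K -> R).
Hypothesis hK : ultrametric_abs absK.
Variable rho : K.
Hypotheses (hrho0 : 0 < absK rho) (hrho1 : absK rho < 1).
Let aK0 := aK0 hK. Let aK_ge0 := aK_ge0 hK. Let aK1 := aK1 hK.

Let q := absK rho.

Definition kapP (a : R) : pred nat := fun j => (0 < j)%N && (q ^+ j.+1 < a).

Definition kappa (a : R) : nat :=
  match pselect (exists j, kapP a j) with
  | left h => ex_minn h
  | right _ => 0%N
  end.

Lemma q_decr m n : (m <= n)%N -> q ^+ n <= q ^+ m.
Proof. move=> h; apply: ler_wiXn2l => //; [exact: ltW | exact: ltW]. Qed.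

Lemma kappa_ex a : 0 < a -> exists j, kapP a j.
Proof.
move=> a0; have [M hM] := pow_small (ltW hrho0) hrho1 a0.
exists (maxn M 1).+1; rewrite /kapP /=; apply: le_lt_trans hM.
apply: q_decr; lia.
Qed.

Lemma kappa_spec a : 0 < a ->
  [/\ (0 < kappa a)%N, q ^+ (kappa a).+1 < a & forall j, kapP a j -> (kappa a <= j)%N].
Proof.
move=> a0; rewrite /kappa; case: pselect => [h|h]; last by case: h; exact: kappa_ex.
case: ex_minnP => m /andP [h1 h2] h3; split => //.
Qed.

Lemma kappa_upper a : 0 < a -> (1 < kappa a)%N -> a <= q ^+ kappa a.
Proof.
move=> a0 h; have [h1 h2 h3] := kappa_spec a0.
rewrite leNgt; apply/negP => h4.
have : (kappa a <= (kappa a).-1)%N.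
  apply: h3; rewrite /kapP; apply/andP; split; first by lia.
  by rewrite prednK //; lia.
lia.
Qed.

Lemma kappa_uniq a j : (0 < j)%N -> q ^+ j.+1 < a -> ((1 < j)%N -> a <= q ^+ j) -> kappa a = j.
Proof.
move=> j0 hj hj2.
have a0 : 0 < a by apply: le_lt_trans hj; apply: exprn_ge0; exact: ltW.
have [h1 h2 h3] := kappa_spec a0.
have hle : (kappa a <= j)%N by apply: h3; rewrite /kapP j0.
apply/eqP; rewrite eqn_leq hle /=; rewrite leqNgt; apply/negP => hlt.
have := hj2 (leq_ltn_trans h1 hlt) => h4.
have := q_decr hlt => h5.
have := lt_le_trans h2 (le_trans h4 h5); by rewrite ltxx.
Qed.

Definition eta (j : nat) (t : K) : K := if (t != 0) && (kappa (absK t) == j) then 1 else 0.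

Definition rr (j : nat) : R := q ^+ j.+1.
Lemma rr_gt0 j : 0 < rr j.
Proof. exact: exprn_gt0. Qed.

Lemma eta_lc_aux j a b : absK (a - b) < rr j -> (a != 0) && (kappa (absK a) == j) ->
  (b != 0) && (kappa (absK b) == j).
Proof.
move=> h /andP [a0 /eqP ha].
have a0' : 0 < absK a by apply: aK_gt0.
have [_ h2 _] := kappa_spec a0'.
have hb : absK b = absK a.
  apply: (aK_close hK); apply: lt_trans h _; by rewrite /rr -ha.
rewrite hb ha eqxx andbT; apply/eqP => b0; move: hb; rewrite b0 aK0 => h0.
by move: a0'; rewrite -h0 ltxx.
Qed.

Lemma eta_lc j a b : absK (a - b) < rr j -> eta j a = eta j b.
Proof.
move=> h; rewrite /eta.
case: (boolP ((a != 0) && _)) => ha; case: (boolP ((b != 0) && _)) => hb //.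
  by move: hb; rewrite (eta_lc_aux h ha).
by move: ha; rewrite (eta_lc_aux (a := b) (b := a) _ hb) // (aKB hK).
Qed.

Lemma eta_bnd j t : absK (eta j t) <= 1.
Proof. rewrite /eta; case: ifP => _; by rewrite ?aK1 ?aK0 ?ler01. Qed.

Definition kap (t : K) : nat := if t == 0 then 0%N else kappa (absK t).

End Kappa.

Section Conc.
Variables (K : fieldType) (R : realType) (absK : K -> R).
Hypothesis hK : ultrametric_abs absK.
Variable rho : K.
Hypotheses (hrho0 : 0 < absK rho) (hrho1 : absK rho < 1).
Variables (E : lmodType K) (d : E -> E -> R).
Hypothesis hE : tvs_metric absK d.
Variables (x : E) (xs ys : nat -> E).
Hypotheses (cxs : d_converges d xs x) (cys : d_converges d ys x).
Let aK0 := aK0 hK. Let aK_ge0 := aK_ge0 hK. Let aK1 := aK1 hK. Let aKM := aKM hK.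
Let aKN := aKN hK. Let aKX := aKX hK.

Let q := absK rho.

Lemma dE_sym u v : d u v = d v u.
Proof. by case: hE => -[_ _ h _] _ _. Qed.
Lemma dE0 u : d u u = 0.
Proof. by case: hE => -[_ h _ _] _ _; apply/h. Qed.

Lemma hadd (u v : E) (e : R) : 0 < e -> exists2 del : R, 0 < del &
  forall u' v' : E, d u u' < del -> d v v' < del -> d (u + v) (u' + v') < e.
Proof. by case: hE => _ h _; apply: h. Qed.
Lemma hsc (a : K) (u : E) (e : R) : 0 < e -> exists2 del : R, 0 < del &
  forall (a' : K) (u' : E), absK (a - a') < del -> d u u' < del -> d (a *: u) (a' *: u') < e.
Proof. by case: hE => _ _ h; apply: h. Qed.

Lemma ex_half (e : R) : exists del : R, 0 < e -> [/\ 0 < del, del <= e / 2 &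
  forall u v, d 0 u < del -> d 0 v < del -> d 0 (u + v) < e].
Proof.
case: (ltP 0 e) => he; last by exists 0.
have [del0 d0 h] := hadd 0 0 he.
exists (Num.min del0 (e / 2)) => _; split.
- by rewrite lt_min d0 divr_gt0.
- by rewrite ge_min lexx orbT.
move=> u v hu hv; move: (h u v); rewrite addr0; apply;
  [apply: lt_le_trans hu _ | apply: lt_le_trans hv _]; by rewrite ge_min lexx.
Qed.

Fixpoint ds (j : nat) : R :=
  match j with 0 => 1 | j'.+1 => proj1_sig (cid (ex_half (ds j'))) end.

Lemma ds_pos j : 0 < ds j.
Proof.
elim: j => [|j IH] /=; first exact: ltr01.
case: (cid (ex_half (ds j))) => del hdel /=; by case: (hdel IH).
Qed.

Lemma ds_next j : ds j.+1 <= ds j / 2 /\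
  forall u v, d 0 u < ds j.+1 -> d 0 v < ds j.+1 -> d 0 (u + v) < ds j.
Proof.
rewrite /=; case: (cid (ex_half (ds j))) => del hdel /=; case: (hdel (ds_pos j)) => _ h1 h2; by split.
Qed.

Lemma ds_mono i j : (i <= j)%N -> ds j <= ds i.
Proof.
elim: j => [|j IH]; first by rewrite leqn0 => /eqP ->.
rewrite leq_eqVlt => /orP [/eqP -> //|h].
apply: le_trans (IH h); have [h1 _] := ds_next j; apply: le_trans h1 _.
have := ds_pos j; lra.
Qed.

Lemma ds_small e : 0 < e -> exists M, ds M <= e.
Proof.
move=> e0.
have hb : forall j, ds j <= 2^-1 ^+ j.
  elim=> [|j IH]; first by rewrite expr0.
  have [h1 _] := ds_next j; apply: le_trans h1 _; rewrite exprSr.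
  have h2 : (0 : R) < 2^-1 by rewrite invr_gt0.
  by rewrite ler_pM2r.
have h2 : (0 : R) <= 2^-1 by rewrite invr_ge0.
have h3 : (2^-1 : R) < 1 by rewrite invf_lt1 // ltr1n.
have [M hM] := pow_small h2 h3 e0.
by exists M; apply: le_trans (hb M) (ltW hM).
Qed.

Lemma tail_small J n (u : nat -> E) : (0 < J)%N ->
  (forall j, (J <= j)%N -> d 0 (u j) < ds j) ->
  d 0 (\sum_(J <= j < J + n) u j) < ds J.-1.
Proof.
elim: n J => [|n IH] J J0 H.
  by rewrite addn0 big_geq // dE0 ds_pos.
rewrite big_ltn; last by rewrite addnS ltnS leq_addr.
have h1 := IH J.+1 (ltn0Sn _) (fun j hj => H j (ltnW hj)).
rewrite addSnnS in h1.
have [_ h2] := ds_next J.-1.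
rewrite prednK // in h2.
apply: h2; [exact: H | exact: h1].
Qed.

Lemma scal_small (B del : R) : 0 < del -> exists2 eps : R, 0 < eps &
  forall u, d u x < eps -> forall a : K, absK a <= B -> d 0 (a *: (u - x)) < del.
Proof.
move=> d0.
have [del1 d1 h1] := hsc 0 0 d0.
set B' := Num.max B 1.
have B'0 : 0 < B' by rewrite lt_max ltr01 orbT.
have [M hM] := pow_small (ltW hrho0) hrho1 (divr_gt0 d1 B'0).
have rM0 : rho ^+ M != 0.
  apply: expf_neq0; apply/eqP => h; move: hrho0; by rewrite h aK0 ltxx.
set mu := (rho ^+ M)^-1.
have [del3 d3 h3] := hsc mu 0 d1.
have [del4 d4 h4] := hadd x (- x) d3.
exists del4 => // u hu a ha.
have hv : d 0 (mu *: (u - x)) < del1.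
  have := h3 mu (u - x); rewrite scaler0; apply; first by rewrite subrr aK0.
  have := h4 u (- x); rewrite subrr; apply; first by rewrite dE_sym.
  by rewrite dE0.
have -> : a *: (u - x) = (a * rho ^+ M) *: (mu *: (u - x)).
  by rewrite scalerA -mulrA mulfV // mulr1.
have := h1 (a * rho ^+ M) (mu *: (u - x)); rewrite scale0r; apply => //.
rewrite sub0r aKN aKM aKX -/q.
have hq : 0 <= q ^+ M by apply: exprn_ge0; exact: ltW.
have hB : B <= B' by rewrite le_max lexx.
have hB0 : B' != 0 by rewrite gt_eqF.
have hM2 : q ^+ M * B' < del1 by rewrite -(mulfVK hB0 del1) ltr_pM2r.
have ha' : absK a <= B' := le_trans ha hB.
have := aK_ge0 a; nra.
Qed.

Definition Bq (j : nat) : R := q^-1 ^+ (j.+1 * j).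

Lemma ex_m j : exists N : nat, forall n, (N <= n)%N ->
  (forall a : K, absK a <= Bq j -> d 0 (a *: (xs n - x)) < ds j) /\
  (forall a : K, absK a <= Bq j -> d 0 (a *: (ys n - x)) < ds j).
Proof.
have [eps e0 h] := scal_small (Bq j) (ds_pos j).
have [Nx hx] := cxs e0; have [Ny hy] := cys e0.
exists (maxn Nx Ny) => n hn; split; apply: h.
  by apply: hx; apply: leq_trans hn; rewrite leq_maxl.
by apply: hy; apply: leq_trans hn; rewrite leq_maxr.
Qed.

Fixpoint mseq (j : nat) : nat :=
  match j with 0 => 0%N | j'.+1 => maxn (mseq j').+1 (proj1_sig (cid (ex_m j'.+1))) end.

Lemma mseq_lt j : (mseq j < mseq j.+1)%N.
Proof. by rewrite /= leq_maxl. Qed.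

Lemma mseq_mono i j : (i <= j)%N -> (mseq i <= mseq j)%N.
Proof.
elim: j => [|j IH]; first by rewrite leqn0 => /eqP ->.
rewrite leq_eqVlt => /orP [/eqP -> //|h].
exact: leq_trans (IH h) (ltnW (mseq_lt j)).
Qed.

Lemma mseq_smono i j : (i < j)%N -> (mseq i < mseq j)%N.
Proof. move=> h; exact: leq_trans (mseq_lt i) (mseq_mono h). Qed.

Definition zz (j : nat) : E := if odd j then xs (mseq j) else ys (mseq j).
Definition ww (j : nat) : E := zz j - x.

Lemma ww_good j : (0 < j)%N -> forall a : K, absK a <= Bq j -> d 0 (a *: ww j) < ds j.
Proof.
case: j => // j _ a ha.
have : (proj1_sig (cid (ex_m j.+1)) <= mseq j.+1)%N by rewrite /= leq_maxr.
case: (cid (ex_m j.+1)) => N hN /= hle.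
have [h1 h2] := hN _ hle.
rewrite /ww /zz; case: (odd j.+1); [exact: h1 | exact: h2].
Qed.

Definition aj (j k : nat) (y : nat -> K) : K := Phi absK (rr absK rho j) (eta absK rho j) k y.
Definition Nk (k : nat) (y : nat -> K) : nat := (\max_(i < k.+1) kap absK rho (y i)).+1.
Definition xk (k : nat) : E := if k is 0 then x else 0.
Definition PhiE (k : nat) (y : nat -> K) : E := xk k + \sum_(0 <= j < Nk k y) aj j k y *: ww j.

Let r0 j := rr_gt0 hrho0 j.
Let flc j := @eta_lc _ _ _ hK rho hrho0 hrho1 j.

Lemma aj_supp j k y : (Nk k y <= j)%N -> aj j k y = 0.
Proof.
move=> hj; apply: Phi_supp => i hi; rewrite /eta.
case: ifP => // /andP [h1 /eqP h2].
have : (kap absK rho (y i) < Nk k y)%N.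
  rewrite ltnS; exact: (leq_bigmax (F := fun i : 'I_k.+1 => kap absK rho (y i)) (Ordinal (hi : (i < k.+1)%N))).
rewrite /kap (negbTE h1) h2 => h; move: (leq_trans h hj); by rewrite ltnn.
Qed.

Lemma PhiE_big k y B : (Nk k y <= B)%N ->
  PhiE k y = xk k + \sum_(0 <= j < B) aj j k y *: ww j.
Proof.
move=> hB; rewrite /PhiE (@big_cat_nat _ _ _ (Nk k y) 0 B) //=.
have -> : \sum_(Nk k y <= j < B) aj j k y *: ww j = 0.
  rewrite big_nat_cond big1 // => j /andP [/andP [hj _] _].
  by rewrite aj_supp // scale0r.
by rewrite addr0.
Qed.

Lemma PhiE_ext k y y' : (forall i, (i <= k)%N -> y i = y' i) -> PhiE k y = PhiE k y'.
Proof.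
move=> H; rewrite /PhiE.
have -> : Nk k y = Nk k y'.
  by rewrite /Nk; congr (_.+1); apply: eq_bigr => i _; rewrite H // -ltnS ltn_ord.
congr (_ + _); apply: eq_bigr => j _; congr (_ *: _); exact: Phi_ext.
Qed.

Lemma PhiE_I k y i : (i <= k)%N ->
  PhiE k (skip y i) - PhiE k (skip y i.+1) = (y i.+1 - y i) *: PhiE k.+1 y.
Proof.
move=> hi.
set B := (Nk k (skip y i) + Nk k (skip y i.+1) + Nk k.+1 y)%N.
rewrite (@PhiE_big k (skip y i) B); last by rewrite /B; lia.
rewrite (@PhiE_big k (skip y i.+1) B); last by rewrite /B; lia.
rewrite (@PhiE_big k.+1 y B); last by rewrite /B; lia.
rewrite (_ : xk k.+1 = 0) // add0r opprD addrACA subrr add0r -sumrB scaler_sumr.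
apply: eq_bigr => j _; rewrite -scalerBl scalerA; congr (_ *: _).
rewrite /aj; refine (Phi_I hK (@r0 j) (@flc j) hrho0 hrho1 y hi).
Qed.

Lemma cE_eq X (near : R -> X -> Prop) (G H : X -> E) x0 :
  (forall x, G x = H x) -> cE d near G x0 -> cE d near H x0.
Proof. move=> e h eps e0; have [del d0 h'] := h eps e0; exists del => // z; rewrite -!e; exact: h'. Qed.

Lemma fin_cont k y0 J : cE d (nearN absK k y0) (fun y => \sum_(0 <= j < J) aj j k y *: ww j) y0.
Proof.
have hm := @nearN_mono _ _ absK k y0.
elim: J => [|J IH].
  by move=> e e0; exists 1 => // y _; rewrite !big_geq // dE0.
apply: (@cE_eq _ _ (fun y => \sum_(0 <= j < J) aj j k y *: ww j + aj J k y *: ww J)).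
  by move=> y; rewrite big_nat_recr.
apply: (cE_add hE hm IH).
apply: (cE_scale hE hm (Phi_cont hK (@r0 J) (@flc J) k y0)).
exact: (cE_const hE).
Qed.

Lemma aj_bnd j k y : (k <= j)%N -> absK (aj j k y) <= Bq j.
Proof.
move=> hkj; apply: le_trans (Phi_bnd hK (@r0 j) (eta_bnd hK rho j) k y) _.
rewrite /rr /Bq -/q.
have q0 : 0 < q := hrho0.
rewrite -exprVn -exprM; apply: ler_weXn2l.
  by rewrite invf_ge1 // ltW.
by rewrite leq_mul2l hkj orbT.
Qed.

Lemma PhiE_cont k y0 : cE d (nearN absK k y0) (PhiE k) y0.
Proof.
move=> e e0.
set N0 := Nk k y0.
set S0 := \sum_(0 <= j < N0) aj j k y0 *: ww j.
have [del1 d1 h1] := hadd (xk k) S0 e0.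
have [del2 d2 h2] := hadd S0 0 d1.
have [M hM] := ds_small d2.
set J := maxn (maxn N0 k.+1) M.+1.
have hJN : (N0 <= J)%N by rewrite /J !leq_max leqnn.
have hJk : (k < J)%N by rewrite /J !leq_max leqnn orbT.
have hJM : (M <= J.-1)%N by rewrite /J; lia.
have hJ0 : (0 < J)%N by lia.
have [del3 d3 h3] := fin_cont k y0 J d2.
exists del3 => // y hy.
have hS0 : \sum_(0 <= j < J) aj j k y0 *: ww j = S0.
  by apply: (@addrI _ (xk k)); rewrite -PhiE_big // /PhiE.
set B := maxn J (Nk k y).
rewrite (@PhiE_big k y0 J) // (@PhiE_big k y B) ?leq_maxr //.
rewrite (@big_cat_nat _ _ _ J 0 B) ?leq_maxl //=.
rewrite hS0; apply: h1; first by rewrite dE0.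
rewrite -[S0]addr0; apply: h2; first by rewrite -hS0; exact: h3.
have -> : B = (J + (B - J))%N by rewrite subnKC // leq_maxl.
apply: lt_le_trans (tail_small _ hJ0 _) _.
  move=> j hj; apply: ww_good; first by lia.
  apply: aj_bnd; lia.
apply: le_trans hM; exact: ds_mono.
Qed.

Definition cc (t : K) : E := PhiE 0 (fun _ => t).

Lemma cc_smooth : smooth_curve absK d cc.
Proof.
exact: (Phi_smooth hK hE PhiE_cont PhiE_ext PhiE_I).
Qed.

Lemma cc_val t : t != 0 -> cc t = zz (kappa absK rho (absK t)).
Proof.
move=> t0; rewrite /cc (@PhiE_big 0 (fun _ => t) (kappa absK rho (absK t)).+1); last first.
  by rewrite /Nk big_ord1 /kap (negbTE t0).
rewrite /= big_nat_recr //= big_nat_cond big1 ?add0r.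
  by rewrite /aj /= /eta t0 eqxx /= scale1r /ww addrC subrK.
move=> j /andP [/andP [_ hj] _]; rewrite /aj /= /eta t0 /=.
by rewrite (gtn_eqF hj) scale0r.
Qed.

Lemma cc_0 : cc 0 = x.
Proof.
rewrite /cc /PhiE /Nk big_ord1 /kap eqxx /= big_nat1 /aj /= /eta eqxx /=.
by rewrite scale0r addr0.
Qed.

End Conc.

Unset Implicit Arguments. Set Strict Implicit.
Local Open Scope classical_set_scope.

Theorem lemma11p1 (K : fieldType) (R : realType) (absK : K -> R)
  (hK : ultrametric_abs absK) (rho : K) (hrho0 : 0 < absK rho) (hrho1 : absK rho < 1)
  (E : lmodType K) (d : E -> E -> R) (hE : tvs_metric absK d)
  (U : set E) (hU : d_open d U) (x : E) (hx : U x)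
  (xs ys : nat -> E)
  (hxs : forall n : nat, (0 < n)%N -> U (xs n))
  (hys : forall n : nat, (0 < n)%N -> U (ys n))
  (cxs : d_converges d xs x) (cys : d_converges d ys x) :
  exists (m : nat -> nat) (c : K -> E),
    [/\ [/\ (forall k : nat, (0 < k)%N -> (0 < m k)%N),
        (forall k l : nat, (0 < k)%N -> (0 < l)%N -> m k = m l -> k = l) &
        (forall k l : nat, (0 < k)%N -> (k <= l)%N -> (m k <= m l)%N)],
        smooth_curve absK d c,
        (forall t : K, U (c t)) &
    [/\ [/\ (forall k : nat, (0 < k)%N -> odd k -> c (rho ^+ k) = xs (m k)),
        (forall k : nat, (0 < k)%N -> ~~ odd k -> c (rho ^+ k) = ys (m k)) &
        c 0 = x],
        (forall t : K, t != 0 -> exists2 r : R, 0 < r &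
           forall s : K, s != 0 -> absK (s - t) < r -> c s = c t),
        (forall t s : K, absK t = absK s -> c t = c s) &
        [set c t | t in [set t : K | t != 0]] =
        [set c (rho ^+ k) | k in [set k : nat | (0 < k)%N]]]].
Proof.
set m := mseq hK hrho0 hrho1 hE cxs cys.
set c := cc hK hrho0 hrho1 hE cxs cys.
have cval : forall t, t != 0 -> c t = zz hK hrho0 hrho1 hE cxs cys (kappa absK rho (absK t)).
  by move=> t; apply: cc_val.
have c0 : c 0 = x by apply: cc_0.
have m0 : m 0%N = 0%N by [].
have msm : forall i j, (i < j)%N -> (m i < m j)%N by move=> i j; apply: mseq_smono.
have rho0 : rho != 0 by apply/eqP => h; have := hrho0; rewrite h (aK0 hK) ltxx.
have rk0 : forall k, rho ^+ k != 0 by move=> k; apply: expf_neq0.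
have krk : forall k, (0 < k)%N -> kappa absK rho (absK (rho ^+ k)) = k.
  move=> k k0; apply: (kappa_uniq hrho0 hrho1 k0); rewrite (aKX hK) //.
  by rewrite exprSr gtr_pMr ?exprn_gt0.
have kpos : forall t, t != 0 -> (0 < kappa absK rho (absK t))%N.
  by move=> t t0; case: (kappa_spec hrho0 hrho1 (aK_gt0 hK t0)).
exists m, c; split; [split| | |split; [split| | |]].
- by move=> k k0; rewrite -m0; apply: msm.
- move=> k l _ _ hkl; case: (ltngtP k l) => // h; move: (msm _ _ h); by rewrite hkl ltnn.
- by move=> k l _ hkl; apply: mseq_mono.
- exact: cc_smooth.
- move=> t; case: (eqVneq t 0) => [->|t0]; first by rewrite c0.
  rewrite cval // /zz; set j := kappa _ _ _.
  have hm : (0 < m j)%N by rewrite -m0; apply: msm; apply: kpos.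
  by case: (odd j); [apply: hxs | apply: hys].
- by move=> k k0 hk; rewrite cval // krk // /zz hk.
- by move=> k k0 hk; rewrite cval // krk // /zz (negbTE hk).
- exact: c0.
- move=> t t0; exists (absK t); first exact: aK_gt0.
  move=> s s0 hs; rewrite !cval //; congr (zz _ _ _ _ _ _ (kappa _ _ _)).
  by apply: (aK_close hK); rewrite (aKB hK).
- move=> t s hts; case: (eqVneq t 0) => [t0|t0].
    have : absK s = 0 by rewrite -hts t0 (aK0 hK).
    by move/(aK_eq0 hK) => ->; rewrite t0.
  have s0 : s != 0 by apply/eqP => h; move: hts; rewrite h (aK0 hK) => /(aK_eq0 hK) /eqP; rewrite (negbTE t0).
  by rewrite !cval // hts.
apply/seteqP; split => y /= [t ht <-].
  exists (kappa absK rho (absK t)); first exact: kpos.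
  by rewrite !cval ?rk0 // krk // kpos.
by exists (rho ^+ t) => //; apply: rk0.
Qed.
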